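(* Let $\mathbf{u}=(u_n)$ be an a-sequence. Then $\{x\in\mathbb{T}: \mathrm{supp}_\mathbf{u}(x)\text{ is finite}\}=t(s_\mathbf{u}(\mathbb{T}))$, the torsion subgroup of $s_\mathbf{u}(\mathbb{T})$.
   Context: An a-sequence is a strictly increasing sequence of integers $\mathbf{u}=(u_n)_{n\in\mathbb{N}}$ with $u_n\mid u_{n+1}$ for all $n$; ratios $q_0=u_0$, $q_n=u_n/u_{n-1}$. $\mathbb{T}=\mathbb{R}/\mathbb{Z}$, and each $x\in\mathbb{T}$ is identified with its representative in $[0,1)$. $s_\mathbf{u}(\mathbb{T})=\{x\in\mathbb{T}: u_nx\to0\text{ in }\mathbb{T}\}$. Canonical representation: for $x\in[0,1)$ there is a unique integer sequence $(c_n)_{n\ge1}$ with $0\le c_n<q_n$ for all $n$, $c_n<q_n-1$ for infinitely many $n$, and $x=\sum_{n\ge1}c_n/u_n$. Then $\mathrm{supp}_\mathbf{u}(x)=\{n: c_n\ne0\}$. *)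

(* Defs.v *)
From Stdlib Require Import Reals Lra Lia Arith.
Open Scope R_scope.

(* An a-sequence: strictly increasing, u n divides u (n+1).
   (Positivity is automatic on nat: u 0 = 0 would force u 1 = 0.) *)
Definition a_sequence (u : nat -> nat) : Prop :=
  forall n : nat, (u n < u (S n))%nat /\ Nat.divide (u n) (u (S n)).

(* ratios: q_0 = u_0, q_n = u_n / u_{n-1} (exact division) *)
Definition ratio (u : nat -> nat) (n : nat) : nat :=
  match n with
  | O => u O
  | S m => (u (S m) / u m)%nat
  end.

(* c is the canonical representation of x (c 0 is irrelevant, indices n >= 1):
   0 <= c_n < q_n, c_n < q_n - 1 infinitely often, x = sum_{n>=1} c_n/u_n. *)
Definition canonical_rep (u : nat -> nat) (x : R) (c : nat -> nat) : Prop :=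
  (forall n : nat, (1 <= n)%nat -> (c n < ratio u n)%nat) /\
  (forall N : nat, exists n : nat, (N <= n)%nat /\ (1 <= n)%nat /\
       (c n < ratio u n - 1)%nat) /\
  infinite_sum (fun k : nat => INR (c (S k)) / INR (u (S k))) x.

Definition finite_support (c : nat -> nat) : Prop :=
  exists N : nat, forall n : nat, (N <= n)%nat -> c n = 0%nat.

(* u_n x -> 0 in T = R/Z *)
Definition in_s_u (u : nat -> nat) (x : R) : Prop :=
  forall eps : R, 0 < eps -> exists N : nat, forall n : nat, (N <= n)%nat ->
    exists z : Z, Rabs (INR (u n) * x - IZR z) < eps.

Definition torsion_T (x : R) : Prop :=
  exists k : nat, (0 < k)%nat /\ exists z : Z, INR k * x = IZR z.

(* Main.v *)
Require Import Defs.
From Stdlib Require Import Reals Lra Lia Arith ZArith.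
Open Scope R_scope.

Section H.
Variable u : nat -> nat.
Hypothesis hu : a_sequence u.
Hypothesis hu0 : u O = 1%nat.

Lemma u_pos : forall n, (0 < u n)%nat.
Proof. induction n. rewrite hu0; lia. destruct (hu n); lia. Qed.

Lemma q_prop : forall m, (ratio u (S m) * u m = u (S m))%nat /\ (2 <= ratio u (S m))%nat.
Proof.
  intro m. destruct (hu m) as [Hl [k Hk]]. simpl.
  pose proof (u_pos m).
  rewrite Hk, Nat.div_mul by lia. split; [lia|]. nia.
Qed.

Lemma u_div : forall n m, (n <= m)%nat -> Nat.divide (u n) (u m).
Proof.
  intros n m; induction m; intros H.
  - assert (n = 0%nat) by lia; subst; apply Nat.divide_refl.
  - destruct (Nat.eq_dec n (S m)). subst; apply Nat.divide_refl.
    apply Nat.divide_trans with (u m). apply IHm; lia. apply (proj2 (hu m)).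
Qed.

Lemma INR_u_neq : forall n, INR (u n) <> 0.
Proof. intro n; apply not_0_INR; pose proof (u_pos n); lia. Qed.

End H.

Lemma ev_sum : forall f N L, (forall n, (N <= n)%nat -> sum_f_R0 f n = L) -> infinite_sum f L.
Proof.
  intros f N L H eps He. exists N. intros n Hn. rewrite H by lia.
  unfold R_dist. rewrite Rminus_diag, Rabs_R0. lra.
Qed.

Lemma const_sum : forall f N, (forall k, (N <= k)%nat -> f k = 0) ->
  forall n, (N <= n)%nat -> sum_f_R0 f n = sum_f_R0 f N.
Proof.
  intros f N Hf n. induction n; intros Hn.
  - assert (N = 0%nat) by lia; subst; reflexivity.
  - destruct (Nat.eq_dec N (S n)). subst; reflexivity.
    simpl. rewrite IHn by lia. rewrite Hf by lia. lra.
Qed.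

Theorem mainTheorem7 (u : nat -> nat) (hu : a_sequence u) (hu0 : u O = 1%nat)
  (x : R) (hx0 : 0 <= x) (hx1 : x < 1) :
  (exists c : nat -> nat, canonical_rep u x c /\ finite_support c)
  <-> (in_s_u u x /\ torsion_T x).
Proof.
  split.
  - intros [c [[Hlt [Hinf Hsum]] [N HN]]].
    set (f := fun k => INR (c (S k)) / INR (u (S k))) in *.
    assert (Hf0 : forall k, (N <= k)%nat -> f k = 0).
    { intros k Hk. unfold f. rewrite HN by lia. simpl. lra. }
    assert (Hx : x = sum_f_R0 f N).
    { apply (uniqueness_sum f). exact Hsum. apply ev_sum with N.
      apply const_sum; auto. }
    assert (Hint : forall m M, (S m <= M)%nat -> exists z : nat,
               INR (u M) * sum_f_R0 f m = INR z).
    { assert (Ht : forall j M, (j <= M)%nat -> exists z : nat,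
                 INR (u M) * (INR (c j) / INR (u j)) = INR z).
      { intros j M HjM. destruct (u_div u hu hu0 j M HjM) as [r Hr].
        exists (c j * r)%nat. rewrite Hr, !mult_INR.
        pose proof (INR_u_neq u hu hu0 j). field; auto. }
      induction m; intros M HM.
      - simpl. unfold f. apply Ht. lia.
      - destruct (IHm M) as [z1 Hz1]. lia.
        destruct (Ht (S (S m)) M) as [z2 Hz2]. lia.
        exists (z1 + z2)%nat. simpl. rewrite plus_INR, <- Hz1, <- Hz2.
        unfold f. ring. }
    destruct (Hint N (S N) (le_n _)) as [z Hz]. rewrite <- Hx in Hz.
    split.
    + intros eps He. exists (S N). intros n Hn.
      destruct (Hint N n Hn) as [z' Hz']. rewrite <- Hx in Hz'.
      exists (Z.of_nat z'). rewrite <- INR_IZR_INZ, Hz'.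
      rewrite Rminus_diag, Rabs_R0. lra.
    + exists (u (S N)). split. apply u_pos; auto. exists (Z.of_nat z).
      rewrite <- INR_IZR_INZ. exact Hz.
  - intros [Hs [k [Hk [z Hz]]]].
    assert (HkR : 0 < INR k) by (apply lt_0_INR; lia).
    destruct (Hs (/ INR k)) as [N HN]. apply Rinv_0_lt_compat; lra.
    destruct (HN N (le_n _)) as [zz Hzz].
    assert (HuN : INR (u N) * x = IZR zz).
    { assert (Habs : Rabs (IZR (Z.of_nat (u N) * z - Z.of_nat k * zz)) < 1).
      { rewrite minus_IZR, !mult_IZR, <- !INR_IZR_INZ, <- Hz.
        replace (INR (u N) * (INR k * x) - INR k * IZR zz)
          with (INR k * (INR (u N) * x - IZR zz)) by ring.
        rewrite Rabs_mult, Rabs_right by lra.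
        apply Rmult_lt_reg_l with (/ INR k). apply Rinv_0_lt_compat; lra.
        rewrite <- Rmult_assoc, Rinv_l, Rmult_1_l, Rmult_1_r by lra. exact Hzz. }
      apply Rabs_def2 in Habs. destruct Habs as [H1 H2].
      assert (Hm : (Z.of_nat (u N) * z - Z.of_nat k * zz = 0)%Z).
      { assert (-1 < Z.of_nat (u N) * z - Z.of_nat k * zz < 1)%Z.
        split; apply lt_IZR; simpl; lra. lia. }
      assert (IZR (Z.of_nat (u N) * z - Z.of_nat k * zz) = 0) by (rewrite Hm; reflexivity).
      rewrite minus_IZR, !mult_IZR, <- !INR_IZR_INZ, <- Hz in H.
      apply Rmult_eq_reg_l with (INR k); [|lra]. lra. }
    pose proof (u_pos u hu hu0 N) as HuNp.
    assert (HuNR : 0 < INR (u N)) by (apply lt_0_INR; lia).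
    assert (Hzz0 : (0 <= zz)%Z) by (apply le_IZR; rewrite <- HuN; nra).
    assert (Hzz1 : (zz < Z.of_nat (u N))%Z) by (apply lt_IZR; rewrite <- HuN, <- INR_IZR_INZ; nra).
    set (w := Z.to_nat zz).
    assert (Hw : INR w = IZR zz) by (unfold w; rewrite INR_IZR_INZ, Z2Nat.id; auto).
    assert (Hwlt : (w < u N)%nat) by (unfold w; lia).
    clear Hs HN Hzz Hz.
    set (D := fun n => (w * u n / u N)%nat).
    set (c := fun n => (D n mod ratio u n)%nat).
    assert (HD0 : D O = 0%nat) by (unfold D; rewrite hu0, Nat.mul_1_r; apply Nat.div_small; auto).
    assert (HDS : forall n, D (S n) = (D n * ratio u (S n) + c (S n))%nat).
    { intro n. destruct (q_prop u hu hu0 n) as [Hq Hq2].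
      unfold c. rewrite (Nat.div_mod (D (S n)) (ratio u (S n))) at 1 by lia.
      f_equal. rewrite Nat.mul_comm. f_equal. unfold D.
      rewrite Nat.Div0.div_div, <- Hq. replace (w * (ratio u (S n) * u n))%nat with (w * u n * ratio u (S n))%nat by ring. apply Nat.Div0.div_mul_cancel_r; lia. }
    assert (HDx : forall n, (N <= n)%nat -> INR (D n) / INR (u n) = x).
    { intros n Hn. destruct (u_div u hu hu0 N n Hn) as [r Hr]. unfold D.
      rewrite Hr, Nat.mul_assoc, Nat.div_mul by lia. rewrite !mult_INR, Hw.
      apply Rmult_eq_reg_l with (INR (u N)); [|lra]. rewrite HuN.
      pose proof (INR_u_neq u hu hu0 N).
      assert (INR r <> 0). { apply not_0_INR. pose proof (u_pos u hu hu0 n). intro; subst; lia. }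
      field. auto. }
    set (f := fun k => INR (c (S k)) / INR (u (S k))).
    assert (Hpart : forall n, sum_f_R0 f n = INR (D (S n)) / INR (u (S n))).
    { induction n.
      - simpl. unfold f. rewrite HDS, HD0. simpl. reflexivity.
      - simpl sum_f_R0. rewrite IHn. unfold f. rewrite (HDS (S n)).
        destruct (q_prop u hu hu0 (S n)) as [Hq Hq2]. rewrite <- Hq.
        rewrite plus_INR, !mult_INR.
        pose proof (INR_u_neq u hu hu0 (S n)).
        assert (INR (ratio u (S (S n))) <> 0) by (apply not_0_INR; lia).
        field. auto. }
    assert (Hc0 : forall n, (N <= n)%nat -> c (S n) = 0%nat).
    { intros n Hn. pose proof (HDx n Hn) as E1. pose proof (HDx (S n) ltac:(lia)) as E2.
      rewrite HDS in E2. destruct (q_prop u hu hu0 n) as [Hq Hq2]. rewrite <- Hq in E2.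
      rewrite plus_INR, !mult_INR in E2.
      pose proof (INR_u_neq u hu hu0 n).
      assert (INR (ratio u (S n)) <> 0) by (apply not_0_INR; lia).
      assert (INR (c (S n)) / (INR (ratio u (S n)) * INR (u n)) = 0).
      { rewrite <- E1 in E2.
        assert ((INR (D n) * INR (ratio u (S n)) + INR (c (S n))) /
          (INR (ratio u (S n)) * INR (u n)) = INR (D n) / INR (u n) + INR (c (S n)) / (INR (ratio u (S n)) * INR (u n))) by (field; auto).
        lra. }
      apply INR_eq. simpl. unfold Rdiv in H1. apply Rmult_integral in H1.
      destruct H1 as [H1|H1]; auto. exfalso; apply Rinv_neq_0_compat in H1; auto. }
    exists c. split; [split; [|split]|].
    + intros n Hn. destruct n. lia. unfold c. apply Nat.mod_upper_bound.
      pose proof (q_prop u hu hu0 n). lia.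
    + intros M. exists (S (N + M)). split; [lia|split; [lia|]].
      rewrite Hc0 by lia. pose proof (q_prop u hu hu0 (N + M)). lia.
    + apply ev_sum with N. intros n Hn. rewrite Hpart. apply HDx. lia.
    + exists (S N). intros n Hn. destruct n. lia. apply Hc0. lia.
Qed.
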